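(* Let $\mathcal{C}_1,\mathcal{C}_2$ be symmetric monoidal anti-involutive categories, each with duals, a monoidal anti-involutive $B\mathbb{Z}/2$-action $(-1)^F$ and a closed monoidal positivity structure $P_i$, such that $(\mathcal{C}_1)_{P_1}$ and $(\mathcal{C}_2)_{P_2}$ are fermionically dagger compact. Let $F\colon(\mathcal{C}_1)_{P_1}\to(\mathcal{C}_2)_{P_2}$ be a symmetric monoidal dagger functor, corresponding to a symmetric monoidal anti-involutive functor $(F,\phi)\colon\mathcal{C}_1\to\mathcal{C}_2$ with $F(P_1)\subseteq P_2$. Then $F(\widetilde{P_1})\subseteq\widetilde{P_2}$.
   Context: Symmetric monoidal anti-involutive category $(\mathcal{C},d,\eta)$: symmetric monoidal category, symmetric monoidal functor $d\colon\mathcal{C}\to\mathcal{C}^{\mathrm{op}}$, monoidal natural isomorphism $\eta\colon\mathrm{id}\Rightarrow d^2$ with $d(\eta_x)\circ\eta_{dx}=\mathrm{id}$. A symmetric monoidal anti-involutive functor $(F,\phi)$: symmetric monoidal functor with monoidal natural isomorphism $\phi\colon F\circ d\Rightarrow d\circ F$ with $\phi_{dx}\circ F(\eta_x)=d(\phi_x)\circ\eta_{F(x)}$. Hermitian pairing: isomorphism $h\colon c\to dc$ with $d(h)\circ\eta_c=h$; $\mathrm{Herm}\,\mathcal{C}$ has objects $(c,h)$, morphisms those of $\mathcal{C}$, dagger $f^\dagger=h_1^{-1}\circ d(f)\circ h_2$, tensor $(c_1\otimes c_2,\chi\circ(h_1\otimes h_2))$. A closed monoidal positivity structure $P$ is a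 collection of Hermitian pairings surjecting onto objects, closed under tensor product and transfer $h\mapsto d(g)\circ h\circ g$ along isomorphisms $g$; $\mathcal{C}_P$ is the full symmetric monoidal dagger subcategory of $\mathrm{Herm}\,\mathcal{C}$ on $P$. $F(P)$ denotes the pairings $\phi_c\circ F(h)$, $h\in P$. A monoidal anti-involutive $B\mathbb{Z}/2$-action is a monoidal natural automorphism $(-1)^F$ of the identity with $(-1)^F\circ(-1)^F=\mathrm{id}$ and $d((-1)^F_c)=(-1)^F_{dc}$. $\widetilde{P}$ is the collection of composites $h\circ(-1)^F_x$ for $(x,h)\in P$. Fix a dual functor $(\cdot)^*$ and let $\kappa_x\colon(dx)^*\to d(x^* )$ be the canonical uniqueness-of-duals isomorphism. $\mathcal{C}_P$ is fermionically dagger compact if for every $(x,h)\in P$ the Hermitian pairing $\kappa_x\circ(h^* )^{-1}\circ(-1)^F_{x^*}\colon x^*\to d(x^* )$ lies in $P$ (equivalently the standard dual functor on $\mathrm{Herm}\,\mathcal{C}$, $(x,h)\mapsto(x^*,\kappa_x\circ(h^* )^{-1})$, restricts to a symmetric monoidal dagger functor $\mathcal{C}_P\to\mathcal{C}_{\widetilde{P}}^{\mathrm{op}}$). *)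

(* Defs.v *)
Unset Implicit Arguments.
Unset Strict Implicit.

Record MonData := {
  ob : Type;
  hom : ob -> ob -> Type;
  idm : forall x, hom x x;
  comp : forall x y z, hom y z -> hom x y -> hom x z;  (* comp g f = g o f *)
  tens : ob -> ob -> ob;
  tensh : forall x x' y y', hom x x' -> hom y y' -> hom (tens x y) (tens x' y');
  unit : ob;
  alpha : forall x y z, hom (tens (tens x y) z) (tens x (tens y z));
  alpha_inv : forall x y z, hom (tens x (tens y z)) (tens (tens x y) z);
  lam : forall x, hom (tens unit x) x;
  lam_inv : forall x, hom x (tens unit x);
  rho : forall x, hom (tens x unit) x;
  rho_inv : forall x, hom x (tens x unit);
  braid : forall x y, hom (tens x y) (tens y x)
}.

Arguments hom {m} _ _.
Arguments idm {m} x.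
Arguments comp {m x y z} _ _.
Arguments tens {m} _ _.
Arguments tensh {m x x' y y'} _ _.
Arguments unit {m}.
Arguments alpha {m} x y z.
Arguments alpha_inv {m} x y z.
Arguments lam {m} x.
Arguments lam_inv {m} x.
Arguments rho {m} x.
Arguments rho_inv {m} x.
Arguments braid {m} x y.

Definition is_iso {C : MonData} {x y : ob C} (f : hom x y) : Prop :=
  exists g : hom y x, comp g f = idm x /\ comp f g = idm y.

Definition is_symmon (C : MonData) : Prop :=
  (forall (x y : ob C) (f : hom x y), comp (idm y) f = f) /\
  (forall (x y : ob C) (f : hom x y), comp f (idm x) = f) /\
  (forall (x y z w : ob C) (f : hom x y) (g : hom y z) (h : hom z w),
      comp h (comp g f) = comp (comp h g) f) /\
  (forall x y : ob C, tensh (idm x) (idm y) = idm (tens x y)) /\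
  (forall (x1 x2 x3 y1 y2 y3 : ob C) (f : hom x1 x2) (f' : hom x2 x3)
          (g : hom y1 y2) (g' : hom y2 y3),
      tensh (comp f' f) (comp g' g) = comp (tensh f' g') (tensh f g)) /\
  (forall x y z : ob C, comp (alpha_inv x y z) (alpha x y z) = idm _ /\
                 comp (alpha x y z) (alpha_inv x y z) = idm _) /\
  (forall x : ob C, comp (lam_inv x) (lam x) = idm _ /\ comp (lam x) (lam_inv x) = idm _) /\
  (forall x : ob C, comp (rho_inv x) (rho x) = idm _ /\ comp (rho x) (rho_inv x) = idm _) /\
  (forall (x x' y y' z z' : ob C) (f : hom x x') (g : hom y y') (h : hom z z'),
      comp (alpha x' y' z') (tensh (tensh f g) h)
      = comp (tensh f (tensh g h)) (alpha x y z)) /\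
  (forall (x y : ob C) (f : hom x y), comp (lam y) (tensh (idm unit) f) = comp f (lam x)) /\
  (forall (x y : ob C) (f : hom x y), comp (rho y) (tensh f (idm unit)) = comp f (rho x)) /\
  (forall w x y z : ob C,
      comp (alpha w x (tens y z)) (alpha (tens w x) y z)
      = comp (tensh (idm w) (alpha x y z))
             (comp (alpha w (tens x y) z) (tensh (alpha w x y) (idm z)))) /\
  (forall x y : ob C, comp (tensh (idm x) (lam y)) (alpha x unit y) = tensh (rho x) (idm y)) /\
  (forall (x x' y y' : ob C) (f : hom x x') (g : hom y y'),
      comp (braid x' y') (tensh f g) = comp (tensh g f) (braid x y)) /\
  (forall x y : ob C, comp (braid y x) (braid x y) = idm (tens x y)) /\
  (forall x y z : ob C,
      comp (alpha y z x) (comp (braid x (tens y z)) (alpha x y z))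
      = comp (tensh (idm y) (braid x z))
             (comp (alpha y x z) (tensh (braid x y) (idm z)))).

Definition op (C : MonData) : MonData := {|
  ob := ob C;
  hom := fun x y => @hom C y x;
  idm := fun x => @idm C x;
  comp := fun x y z (g : @hom C z y) (f : @hom C y x) => comp f g;
  tens := @tens C;
  tensh := fun x x' y y' (f : @hom C x' x) (g : @hom C y' y) => tensh f g;
  unit := @unit C;
  alpha := @alpha_inv C;
  alpha_inv := @alpha C;
  lam := @lam_inv C;
  lam_inv := @lam C;
  rho := @rho_inv C;
  rho_inv := @rho C;
  braid := fun x y => @braid C y x
|}.

Record SMFun (C D : MonData) := {
  fob : ob C -> ob D;
  fhom : forall x y, @hom C x y -> @hom D (fob x) (fob y);
  fmu : forall x y, @hom D (tens (fob x) (fob y)) (fob (tens x y));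
  fmu_inv : forall x y, @hom D (fob (tens x y)) (tens (fob x) (fob y));
  feps : @hom D unit (fob unit);
  feps_inv : @hom D (fob unit) unit
}.
Arguments fob {C D} s _.
Arguments fhom {C D} s {x y} _.
Arguments fmu {C D} s x y.
Arguments fmu_inv {C D} s x y.
Arguments feps {C D} s.
Arguments feps_inv {C D} s.

Definition is_smfun {C D : MonData} (F : SMFun C D) : Prop :=
  (forall x, fhom F (idm x) = idm (fob F x)) /\
  (forall x y z (f : @hom C x y) (g : @hom C y z),
      fhom F (comp g f) = comp (fhom F g) (fhom F f)) /\
  (forall x y, comp (fmu_inv F x y) (fmu F x y) = idm _ /\
               comp (fmu F x y) (fmu_inv F x y) = idm _) /\
  (comp (feps_inv F) (feps F) = idm _ /\ comp (feps F) (feps_inv F) = idm _) /\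
  (forall x x' y y' (f : @hom C x x') (g : @hom C y y'),
      comp (fmu F x' y') (tensh (fhom F f) (fhom F g))
      = comp (fhom F (tensh f g)) (fmu F x y)) /\
  (forall x y z,
      comp (fhom F (alpha x y z)) (comp (fmu F (tens x y) z) (tensh (fmu F x y) (idm _)))
      = comp (fmu F x (tens y z))
             (comp (tensh (idm _) (fmu F y z)) (alpha (fob F x) (fob F y) (fob F z)))) /\
  (forall x, comp (fhom F (lam x)) (comp (fmu F unit x) (tensh (feps F) (idm _)))
             = lam (fob F x)) /\
  (forall x, comp (fhom F (rho x)) (comp (fmu F x unit) (tensh (idm _) (feps F)))
             = rho (fob F x)) /\
  (forall x y, comp (fhom F (braid x y)) (fmu F x y)
               = comp (fmu F y x) (braid (fob F x) (fob F y))).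

Definition op_fun {C D : MonData} (F : SMFun C D) : SMFun (op C) (op D) :=
  @Build_SMFun (op C) (op D) (fob F)
    (fun (x y : ob C) (f : @hom C y x) => @fhom C D F y x f)
    (fmu_inv F) (fmu F) (feps_inv F) (feps F).

Definition comp_fun {C D E : MonData} (F : SMFun C D) (G : SMFun D E) : SMFun C E := {|
  fob := fun x => fob G (fob F x);
  fhom := fun x y f => fhom G (fhom F f);
  fmu := fun x y => comp (fhom G (fmu F x y)) (fmu G (fob F x) (fob F y));
  fmu_inv := fun x y => comp (fmu_inv G (fob F x) (fob F y)) (fhom G (fmu_inv F x y));
  feps := comp (fhom G (feps F)) (feps G);
  feps_inv := comp (feps_inv G) (fhom G (feps_inv F))
|}.

Definition id_oo (C : MonData) : SMFun C (op (op C)) :=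
  @Build_SMFun C (op (op C)) (fun x => x)
    (fun (x y : ob C) (f : @hom C x y) => f)
    (fun x y => @idm C (tens x y)) (fun x y => @idm C (tens x y))
    (@idm C unit) (@idm C unit).

Definition is_monnatiso {C D : MonData} (F G : SMFun C D)
    (theta : forall x, @hom D (fob F x) (fob G x)) : Prop :=
  (forall x y (f : @hom C x y), comp (theta y) (fhom F f) = comp (fhom G f) (theta x)) /\
  (forall x y, comp (theta (tens x y)) (fmu F x y)
               = comp (fmu G x y) (tensh (theta x) (theta y))) /\
  (comp (theta unit) (feps F) = feps G) /\
  (forall x, is_iso (theta x)).
Arguments is_monnatiso {C D} F G theta.

Record SMAI := {
  smC : MonData;
  dF : SMFun smC (op smC);
  eta : forall x : ob smC, @hom smC x (fob dF (fob dF x))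
}.
Arguments smC s.
Arguments dF s.
Arguments eta s x.

Definition dob (S : SMAI) (x : ob (smC S)) : ob (smC S) := fob (dF S) x.
Definition dhom (S : SMAI) {x y : ob (smC S)} (f : @hom (smC S) x y)
  : @hom (smC S) (dob S y) (dob S x) := fhom (dF S) f.
Arguments dob S x.
Arguments dhom S {x y} f.

Definition is_SMAI (S : SMAI) : Prop :=
  is_symmon (smC S) /\
  is_smfun (dF S) /\
  is_monnatiso (id_oo (smC S)) (comp_fun (dF S) (op_fun (dF S))) (eta S) /\
  (forall x : ob (smC S),
     @comp (smC S) _ _ _ (dhom S (eta S x)) (eta S (dob S x)) = @idm (smC S) (dob S x)).

Definition chi (S : SMAI) (x y : ob (smC S))
  : @hom (smC S) (@tens (smC S) (dob S x) (dob S y)) (dob S (@tens (smC S) x y))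
  := fmu_inv (dF S) x y.
Arguments chi S x y.

Definition is_SMAI_functor (S1 S2 : SMAI) (F : SMFun (smC S1) (smC S2))
    (phi : forall x, @hom (smC S2) (fob F (dob S1 x)) (dob S2 (fob F x)))
    : Prop :=
  is_smfun F /\
  (* phi : F o d => d o F, a monoidal natural iso of functors C1 -> C2^op
     (stated in C2^op, where its components point from dF(x) to F(dx)) *)
  is_monnatiso (comp_fun F (dF S2)) (comp_fun (dF S1) (op_fun F)) phi /\
  (forall x : ob (smC S1),
     @comp (smC S2) _ _ _ (phi (dob S1 x)) (fhom F (eta S1 x))
     = @comp (smC S2) _ _ _ (dhom S2 (phi x)) (eta S2 (fob F x))).
Arguments is_SMAI_functor {S1 S2} F phi.

Definition Pairings (S : SMAI) : Type :=
  forall x : ob (smC S), @hom (smC S) x (dob S x) -> Prop.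

Definition is_herm (S : SMAI) (x : ob (smC S)) (h : @hom (smC S) x (dob S x)) : Prop :=
  is_iso h /\ @comp (smC S) _ _ _ (dhom S h) (eta S x) = h.
Arguments is_herm {S x} h.

Definition is_closed_pos (S : SMAI) (P : Pairings S) : Prop :=
  (forall x h, P x h -> is_herm h) /\
  (forall x, exists h, P x h) /\
  (forall (x1 x2 : ob (smC S)) h1 h2, P x1 h1 -> P x2 h2 ->
      P (@tens (smC S) x1 x2) (@comp (smC S) _ _ _ (chi S x1 x2) (@tensh (smC S) _ _ _ _ h1 h2))) /\
  (forall (x y : ob (smC S)) (g : @hom (smC S) x y) h, is_iso g -> P y h ->
      P x (@comp (smC S) _ _ _ (dhom S g) (@comp (smC S) _ _ _ h g))).
Arguments is_closed_pos {S} P.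

(* F(P) : the pairings phi_c o F(h), (c,h) in P. *)
Definition image_pairings (S1 S2 : SMAI) (F : SMFun (smC S1) (smC S2))
    (phi : forall x, @hom (smC S2) (fob F (dob S1 x)) (dob S2 (fob F x)))
    (P : Pairings S1) : Pairings S2 :=
  fun y k => exists (x : ob (smC S1)) h, P x h /\
    exists e : fob F x = y,
      match e in _ = y' return @hom (smC S2) y' (dob S2 y') -> Prop with
      | eq_refl => fun k' => k' = @comp (smC S2) _ _ _ (phi x) (fhom F h)
      end k.
Arguments image_pairings {S1 S2} F phi P _ _.

Definition pairings_sub (S : SMAI) (P Q : Pairings S) : Prop :=
  forall x h, P x h -> Q x h.
Arguments pairings_sub {S} P Q.

Definition is_fermion_action (S : SMAI) (fl : forall x : ob (smC S), @hom (smC S) x x)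
    : Prop :=
  (forall (x y : ob (smC S)) (f : @hom (smC S) x y),
      @comp (smC S) _ _ _ f (fl x) = @comp (smC S) _ _ _ (fl y) f) /\
  (forall x y : ob (smC S), fl (@tens (smC S) x y) = @tensh (smC S) _ _ _ _ (fl x) (fl y)) /\
  (fl (@unit (smC S)) = @idm (smC S) (@unit (smC S))) /\
  (forall x, @comp (smC S) _ _ _ (fl x) (fl x) = @idm (smC S) x) /\
  (forall x, dhom S (fl x) = fl (dob S x)).
Arguments is_fermion_action {S} fl.

Definition Ptilde (S : SMAI) (fl : forall x : ob (smC S), @hom (smC S) x x)
    (P : Pairings S) : Pairings S :=
  fun x h => exists h0, P x h0 /\ h = @comp (smC S) _ _ _ h0 (fl x).
Arguments Ptilde {S} fl P _ _.

Record DualData (C : MonData) := {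
  dual : ob C -> ob C;
  ev : forall x, @hom C (tens (dual x) x) unit;
  coev : forall x, @hom C unit (tens x (dual x))
}.
Arguments dual {C} d x.
Arguments ev {C} d x.
Arguments coev {C} d x.

Definition is_duals {C : MonData} (D : DualData C) : Prop :=
  (forall x : ob C, comp (rho x) (comp (tensh (idm x) (ev D x))
               (comp (alpha x (dual D x) x)
                 (comp (tensh (coev D x) (idm x)) (lam_inv x)))) = idm x) /\
  (forall x : ob C, comp (lam (dual D x)) (comp (tensh (ev D x) (idm (dual D x)))
               (comp (alpha_inv (dual D x) x (dual D x))
                 (comp (tensh (idm (dual D x)) (coev D x)) (rho_inv (dual D x)))))
             = idm (dual D x)).

Definition dualh {C : MonData} (D : DualData C) {x y : ob C} (f : @hom C x y)
  : @hom C (dual D y) (dual D x) :=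
  comp (lam (dual D x))
   (comp (tensh (ev D y) (idm (dual D x)))
    (comp (tensh (tensh (idm (dual D y)) f) (idm (dual D x)))
     (comp (alpha_inv (dual D y) x (dual D x))
      (comp (tensh (idm (dual D y)) (coev D x)) (rho_inv (dual D y)))))).
Arguments dualh {C} D {x y} f.

(* d(x^dual) is a dual of dx, with coevaluation
   I -> dI -> d(x^dual (x) x) -> d(x^dual) (x) dx -> dx (x) d(x^dual),
   i.e. braid o chi^-1 o d(ev_x) o chi_0. *)
Definition coev_d (S : SMAI) (D : DualData (smC S)) (x : ob (smC S))
  : @hom (smC S) (@unit (smC S)) (@tens (smC S) (dob S x) (dob S (dual D x))) :=
  @comp (smC S) _ _ _ (@braid (smC S) (dob S (dual D x)) (dob S x))
   (@comp (smC S) _ _ _ (fmu (dF S) (dual D x) x)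
    (@comp (smC S) _ _ _ (dhom S (ev D x)) (feps_inv (dF S)))).
Arguments coev_d {S} D x.

(* kappa_x : (dx)^dual -> d(x^dual), the canonical uniqueness-of-duals
   isomorphism between the chosen dual (dx)^dual of dx and d(x^dual). *)
Definition kappa (S : SMAI) (D : DualData (smC S)) (x : ob (smC S))
  : @hom (smC S) (dual D (dob S x)) (dob S (dual D x)) :=
  let C := smC S in
  let dx := dob S x in
  let dxs := dob S (dual D x) in
  @comp C _ _ _ (@lam C dxs)
   (@comp C _ _ _ (@tensh C _ _ _ _ (ev D dx) (@idm C dxs))
    (@comp C _ _ _ (@alpha_inv C (dual D dx) dx dxs)
     (@comp C _ _ _ (@tensh C _ _ _ _ (@idm C (dual D dx)) (coev_d D x))
        (@rho_inv C (dual D dx))))).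
Arguments kappa {S} D x.

Definition ferm_dagger_compact (S : SMAI) (D : DualData (smC S))
    (fl : forall x : ob (smC S), @hom (smC S) x x) (P : Pairings S) : Prop :=
  forall x h, P x h ->
    forall k : @hom (smC S) (dual D x) (dual D (dob S x)),
      @comp (smC S) _ _ _ k (dualh D h) = @idm (smC S) _ ->
      @comp (smC S) _ _ _ (dualh D h) k = @idm (smC S) _ ->
      P (dual D x) (@comp (smC S) _ _ _ (kappa D x) (@comp (smC S) _ _ _ k (fl (dual D x)))).
Arguments ferm_dagger_compact {S} D fl P.

(* Main.v *)
Require Import Defs.
From Corelib Require Import ssreflect.


Notation "g ⊚ f" := (comp g f) (at level 40, left associativity).
Notation "f ⊗ g" := (tensh f g) (at level 35).

Definition is_mon (C : MonData) : Prop :=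
  (forall (x y : ob C) (f : hom x y), comp (idm y) f = f) /\
  (forall (x y : ob C) (f : hom x y), comp f (idm x) = f) /\
  (forall (x y z w : ob C) (f : hom x y) (g : hom y z) (h : hom z w),
      comp h (comp g f) = comp (comp h g) f) /\
  (forall x y : ob C, tensh (idm x) (idm y) = idm (tens x y)) /\
  (forall (x1 x2 x3 y1 y2 y3 : ob C) (f : hom x1 x2) (f' : hom x2 x3)
          (g : hom y1 y2) (g' : hom y2 y3),
      tensh (comp f' f) (comp g' g) = comp (tensh f' g') (tensh f g)) /\
  (forall x y z : ob C, comp (alpha_inv x y z) (alpha x y z) = idm _ /\
                 comp (alpha x y z) (alpha_inv x y z) = idm _) /\
  (forall x : ob C, comp (lam_inv x) (lam x) = idm _ /\ comp (lam x) (lam_inv x) = idm _) /\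
  (forall x : ob C, comp (rho_inv x) (rho x) = idm _ /\ comp (rho x) (rho_inv x) = idm _) /\
  (forall (x x' y y' z z' : ob C) (f : hom x x') (g : hom y y') (h : hom z z'),
      comp (alpha x' y' z') (tensh (tensh f g) h)
      = comp (tensh f (tensh g h)) (alpha x y z)) /\
  (forall (x y : ob C) (f : hom x y), comp (lam y) (tensh (idm unit) f) = comp f (lam x)) /\
  (forall (x y : ob C) (f : hom x y), comp (rho y) (tensh f (idm unit)) = comp f (rho x)) /\
  (forall w x y z : ob C,
      comp (alpha w x (tens y z)) (alpha (tens w x) y z)
      = comp (tensh (idm w) (alpha x y z))
             (comp (alpha w (tens x y) z) (tensh (alpha w x y) (idm z)))) /\
  (forall x y : ob C, comp (tensh (idm x) (lam y)) (alpha x unit y) = tensh (rho x) (idm y)).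

Lemma symmon_mon C : is_symmon C -> is_mon C.
Proof.
  move=> [h1 [h2 [h3 [h4 [h5 [h6 [h7 [h8 [h9 [h10 [h11 [h12 [h13 _]]]]]]]]]]]]].
  repeat split; auto; try apply h6; try apply h7; try apply h8.
Qed.

Class Mon (C : MonData) : Prop := mon_ax : is_mon C.

Section Mon.
Context {C : MonData} {HC : Mon C}.

Lemma idL (x y : ob C) (f : hom x y) : idm y ⊚ f = f.  Proof. apply HC. Qed.
Lemma idR (x y : ob C) (f : hom x y) : f ⊚ idm x = f.  Proof. apply HC. Qed.
Lemma compA (x y z w : ob C) (f : hom x y) (g : hom y z) (h : hom z w) :
  h ⊚ (g ⊚ f) = (h ⊚ g) ⊚ f.  Proof. apply HC. Qed.
Lemma tid (x y : ob C) : idm x ⊗ idm y = idm (tens x y). Proof. apply HC. Qed.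
Lemma tcomp (x1 x2 x3 y1 y2 y3 : ob C) (f : hom x1 x2) (f' : hom x2 x3)
          (g : hom y1 y2) (g' : hom y2 y3) : (f' ⊚ f) ⊗ (g' ⊚ g) = (f' ⊗ g') ⊚ (f ⊗ g).
Proof. apply HC. Qed.
Lemma aK (x y z : ob C) : alpha_inv x y z ⊚ alpha x y z = idm _. Proof. apply HC. Qed.
Lemma aK' (x y z : ob C) : alpha x y z ⊚ alpha_inv x y z = idm _. Proof. apply HC. Qed.
Lemma lK (x : ob C) : lam_inv x ⊚ lam x = idm _. Proof. apply HC. Qed.
Lemma lK' (x : ob C) : lam x ⊚ lam_inv x = idm _. Proof. apply HC. Qed.
Lemma rK (x : ob C) : rho_inv x ⊚ rho x = idm _. Proof. apply HC. Qed.
Lemma rK' (x : ob C) : rho x ⊚ rho_inv x = idm _. Proof. apply HC. Qed.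
Lemma anat (x x' y y' z z' : ob C) (f : hom x x') (g : hom y y') (h : hom z z') :
  alpha x' y' z' ⊚ ((f ⊗ g) ⊗ h) = (f ⊗ (g ⊗ h)) ⊚ alpha x y z. Proof. apply HC. Qed.
Lemma lnat (x y : ob C) (f : hom x y) : lam y ⊚ (idm unit ⊗ f) = f ⊚ lam x. Proof. apply HC. Qed.
Lemma rnat (x y : ob C) (f : hom x y) : rho y ⊚ (f ⊗ idm unit) = f ⊚ rho x. Proof. apply HC. Qed.
Lemma pent (w x y z : ob C) : alpha w x (tens y z) ⊚ alpha (tens w x) y z
      = (idm w ⊗ alpha x y z) ⊚ (alpha w (tens x y) z ⊚ (alpha w x y ⊗ idm z)).
Proof. apply HC. Qed.
Lemma tri (x y : ob C) : (idm x ⊗ lam y) ⊚ alpha x unit y = rho x ⊗ idm y. Proof. apply HC. Qed.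

Lemma cA {y z w : ob C} {a : hom z w} {b : hom y z} {c : hom y w}
  (e : a ⊚ b = c) (v : ob C) (r : hom v y) : a ⊚ (b ⊚ r) = c ⊚ r.
Proof. by rewrite compA e. Qed.


Lemma cAr {y z w : ob C} {a : hom z w} {b : hom y z} {c : hom y w}
  (e : c = a ⊚ b) (v : ob C) (r : hom v y) : c ⊚ r = a ⊚ (b ⊚ r).
Proof. by rewrite compA e. Qed.

Lemma t1comp (w x y z : ob C) (f : hom x y) (g : hom y z) :
  idm w ⊗ (g ⊚ f) = (idm w ⊗ g) ⊚ (idm w ⊗ f).
Proof. by rewrite -tcomp idL. Qed.
Lemma tcomp1 (w x y z : ob C) (f : hom x y) (g : hom y z) :
  (g ⊚ f) ⊗ idm w = (g ⊗ idm w) ⊚ (f ⊗ idm w).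
Proof. by rewrite -tcomp idL. Qed.
Lemma tsplit1 (x x' y y' : ob C) (f : hom x x') (g : hom y y') :
  f ⊗ g = (f ⊗ idm y') ⊚ (idm x ⊗ g).
Proof. by rewrite -tcomp idL idR. Qed.
Lemma tsplit2 (x x' y y' : ob C) (f : hom x x') (g : hom y y') :
  f ⊗ g = (idm x' ⊗ g) ⊚ (f ⊗ idm y).
Proof. by rewrite -tcomp idL idR. Qed.
Lemma tswap (x x' y y' : ob C) (f : hom x x') (g : hom y y') :
  (f ⊗ idm y') ⊚ (idm x ⊗ g) = (idm x' ⊗ g) ⊚ (f ⊗ idm y).
Proof. by rewrite -tsplit1 -tsplit2. Qed.

Lemma iso_r {x y z : ob C} (b : hom x y) (b' : hom y x) (hb : b ⊚ b' = idm y)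
  (a c : hom y z) : a ⊚ b = c ⊚ b -> a = c.
Proof. move=> E. by rewrite -(idR _ _ a) -(idR _ _ c) -hb !compA E. Qed.
Lemma iso_l {x y z : ob C} (b : hom y z) (b' : hom z y) (hb : b' ⊚ b = idm y)
  (a c : hom x y) : b ⊚ a = b ⊚ c -> a = c.
Proof. move=> E. by rewrite -(idL _ _ a) -(idL _ _ c) -hb -!compA E. Qed.

Lemma nat_inv {x y x' y' : ob C} (a : hom x y) (a' : hom y x) (b : hom x' y') (b' : hom y' x')
  (F : hom x x') (G : hom y y') :
  a ⊚ a' = idm y -> b' ⊚ b = idm x' -> b ⊚ F = G ⊚ a -> b' ⊚ G = F ⊚ a'.
Proof.
  move=> ha hb E. rewrite -(idR _ _ (b' ⊚ G)) -ha !compA -(compA _ _ _ _ _ G b').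
  by rewrite -E compA hb idL.
Qed.

Lemma anat_inv (x x' y y' z z' : ob C) (f : hom x x') (g : hom y y') (h : hom z z') :
  alpha_inv x' y' z' ⊚ (f ⊗ (g ⊗ h)) = ((f ⊗ g) ⊗ h) ⊚ alpha_inv x y z.
Proof. apply: nat_inv; [apply: aK' | apply: aK | apply: anat]. Qed.
Lemma lnat_inv (x y : ob C) (f : hom x y) : lam_inv y ⊚ f = (idm unit ⊗ f) ⊚ lam_inv x.
Proof. apply: nat_inv; [apply: lK' | apply: lK | by rewrite lnat]. Qed.
Lemma rnat_inv (x y : ob C) (f : hom x y) : rho_inv y ⊚ f = (f ⊗ idm unit) ⊚ rho_inv x.
Proof. apply: nat_inv; [apply: rK' | apply: rK | by rewrite rnat]. Qed.

Lemma faith_l (x y : ob C) (f g : hom x y) : idm unit ⊗ f = idm unit ⊗ g -> f = g.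
Proof.
  move=> E. rewrite -(idR _ _ f) -(idR _ _ g) -(lK' x) !compA -!lnat E. done.
Qed.
Lemma faith_r (x y : ob C) (f g : hom x y) : f ⊗ idm unit = g ⊗ idm unit -> f = g.
Proof.
  move=> E. rewrite -(idR _ _ f) -(idR _ _ g) -(rK' x) !compA -!rnat E. done.
Qed.

Lemma aisoT (a b c d : ob C) : (alpha a b c ⊗ idm d) ⊚ (alpha_inv a b c ⊗ idm d) = idm _.
Proof. by rewrite -tcomp1 aK' tid. Qed.

Lemma kelly1 (x y : ob C) : lam (tens x y) ⊚ alpha unit x y = lam x ⊗ idm y.
Proof.
  apply: faith_l.
  apply: (iso_r _ _ (aK' unit (tens unit x) y)).
  apply: (iso_r _ _ (aisoT unit unit x y)).
  rewrite -!compA t1comp -compA -pent.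
  rewrite compA tri -(tid x y). rewrite -(anat _ _ _ _ _ _ (rho unit) (idm x) (idm y)). rewrite -(tri unit x) tcomp1 compA (anat _ _ _ _ _ _ (idm unit) (lam x) (idm y)) -compA. done.
Qed.

Lemma kelly2 (x y : ob C) : (idm x ⊗ rho y) ⊚ alpha x y unit = rho (tens x y).
Proof.
  apply: faith_r.
  apply: (iso_l _ _ (aK x y unit)).
  symmetry.
  rewrite -(tri (tens x y) unit) -(tid x y) compA
    (anat _ _ _ _ _ _ (idm x) (idm y) (lam unit)) -compA pent compA -t1comp
    tri compA -(anat _ _ _ _ _ _ (idm x) (rho y) (idm unit)) -compA -tcomp1. done.
Qed.

Lemma kelly3 : lam (@unit C) = rho unit.
Proof.
  apply: faith_r.
  rewrite -kelly1 -tri.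
  have E : idm unit ⊗ lam (@unit C) = lam (tens unit unit).
  { apply: (iso_l _ _ (lK (@unit C))). by rewrite lnat. }
  by rewrite E.
Qed.

Lemma inv_eq {x y z : ob C} (A : hom y z) (A' : hom z y) (B : hom x y) (B' : hom y x)
  (D : hom x z) (D' : hom z x) :
  A' ⊚ A = idm y -> B' ⊚ B = idm x -> D ⊚ D' = idm z -> A ⊚ B = D -> B' ⊚ A' = D'.
Proof.
  move=> hA hB hD E. rewrite -(idR _ _ (B' ⊚ A')) -hD -E !compA -(compA _ _ _ _ A A' B').
  by rewrite hA idR hB idL.
Qed.

Lemma t1K (w x y : ob C) (f : hom x y) (g : hom y x) : g ⊚ f = idm x ->
  (idm w ⊗ g) ⊚ (idm w ⊗ f) = idm _.
Proof. move=> E. by rewrite -t1comp E tid. Qed.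
Lemma tK1 (w x y : ob C) (f : hom x y) (g : hom y x) : g ⊚ f = idm x ->
  (g ⊗ idm w) ⊚ (f ⊗ idm w) = idm _.
Proof. move=> E. by rewrite -tcomp1 E tid. Qed.

Lemma tri_inv (x y : ob C) : alpha_inv x unit y ⊚ (idm x ⊗ lam_inv y) = rho_inv x ⊗ idm y.
Proof.
  apply: (inv_eq (idm x ⊗ lam y) _ (alpha x unit y)).
  - by apply: t1K; apply: lK.
  - by apply: aK.
  - by apply: tK1; apply: rK'.
  - by apply: tri.
Qed.

Lemma pent_inv (w x y z : ob C) :
  alpha_inv (tens w x) y z ⊚ alpha_inv w x (tens y z)
  = (alpha_inv w x y ⊗ idm z) ⊚ (alpha_inv w (tens x y) z ⊚ (idm w ⊗ alpha_inv x y z)).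
Proof.
  apply: (inv_eq (alpha w x (tens y z)) _ (alpha (tens w x) y z) _ _ _ _ _ _ (pent w x y z)).
  - by apply: aK.
  - by apply: aK.
  - rewrite -!compA (cA (tK1 z _ _ _ _ (aK' w x y))) idL (cA (aK' _ _ _)) idL.
    by apply: t1K; apply: aK'.
Qed.

Lemma cA3 {y z w u : ob C} {a : hom w u} {b : hom z w} {c : hom y z} {d : hom y u}
  (e : a ⊚ (b ⊚ c) = d) (v : ob C) (r : hom v y) : a ⊚ (b ⊚ (c ⊚ r)) = d ⊚ r.
Proof. by rewrite !compA -(compA _ _ _ _ c b a) e. Qed.

End Mon.

Lemma mon_op (C : MonData) : Mon C -> Mon (op C).
Proof.
  move=> HC. rewrite /Mon /is_mon /=.
  repeat split.
  - move=> x y f. by rewrite idR.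
  - move=> x y f. by rewrite idL.
  - move=> x y z w f g h. by rewrite compA.
  - move=> x y. by rewrite tid.
  - move=> *. by rewrite tcomp.
  - move=> *. by rewrite aK.
  - move=> *. by rewrite aK'.
  - move=> *. by rewrite lK.
  - move=> *. by rewrite lK'.
  - move=> *. by rewrite rK.
  - move=> *. by rewrite rK'.
  - move=> *. by rewrite anat_inv.
  - move=> *. by rewrite lnat_inv.
  - move=> *. by rewrite rnat_inv.
  - move=> *. by rewrite pent_inv compA.
  - move=> *. by rewrite tri_inv.
Qed.


Definition DP {C : MonData} (Y Z : ob C) (E : hom (tens Z Y) unit) (Cv : hom unit (tens Y Z)) : Prop :=
  (comp (rho Y) (comp (tensh (idm Y) E) (comp (alpha Y Z Y) (comp (tensh Cv (idm Y)) (lam_inv Y)))) = idm Y) /\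
  (comp (lam Z) (comp (tensh E (idm Z)) (comp (alpha_inv Z Y Z) (comp (tensh (idm Z) Cv) (rho_inv Z)))) = idm Z).

Definition canm {C : MonData} {Y Z1 Z2 : ob C} (E1 : hom (tens Z1 Y) unit) (C2 : hom unit (tens Y Z2))
  : hom Z1 Z2 :=
  lam Z2 ⊚ ((E1 ⊗ idm Z2) ⊚ (alpha_inv Z1 Y Z2 ⊚ ((idm Z1 ⊗ C2) ⊚ rho_inv Z1))).

Section Duals.
Context {C : MonData} {HC : Mon C}.

Lemma kelly2' (x y : ob C) : idm x ⊗ rho y = rho (tens x y) ⊚ alpha_inv x y unit.
Proof. by rewrite -kelly2 -compA aK' idR. Qed.

Lemma pentA (w x y z : ob C) : alpha_inv w x (tens y z) ⊚ (idm w ⊗ alpha x y z)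
  = alpha (tens w x) y z ⊚ ((alpha_inv w x y ⊗ idm z) ⊚ alpha_inv w (tens x y) z).
Proof.
  apply: (iso_r _ _ (aK' w (tens x y) z)).
  apply: (iso_r _ _ (tK1 z _ _ _ _ (aK' w x y))).
  rewrite -!compA (cA (aK _ _ _)) idL (tK1 z _ _ _ _ (aK w x y)) idR -pent.
  by rewrite (cA (aK _ _ _)) idL.
Qed.

Lemma detR {Y Z : ob C} {E Cv} : @DP C Y Z E Cv ->
  forall (a : ob C) (f f' : hom a Y), E ⊚ (idm Z ⊗ f) = E ⊚ (idm Z ⊗ f') -> f = f'.
Proof.
  move=> [zY _] a.
  have key : forall f : hom a Y, f = rho Y ⊚ ((idm Y ⊗ (E ⊚ (idm Z ⊗ f))) ⊚ (alpha Y Z a ⊚ ((Cv ⊗ idm a) ⊚ lam_inv a))).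
  { move=> f. rewrite -{1}(idL _ _ f) -{1}zY -!compA lnat_inv (cA (tswap _ _ _ _ _ _)).
    rewrite -(tid Y Z) -!compA (cA (anat _ _ _ _ _ _ _ _ _)). by rewrite t1comp -!compA. }
  move=> f f' E'. by rewrite (key f) (key f') E'.
Qed.

Lemma detL {Y Z : ob C} {E Cv} : @DP C Y Z E Cv ->
  forall (a : ob C) (f f' : hom a Z), E ⊚ (f ⊗ idm Y) = E ⊚ (f' ⊗ idm Y) -> f = f'.
Proof.
  move=> [_ zZ] a.
  have key : forall f : hom a Z, f = lam Z ⊚ (((E ⊚ (f ⊗ idm Y)) ⊗ idm Z) ⊚ (alpha_inv a Y Z ⊚ ((idm a ⊗ Cv) ⊚ rho_inv a))).
  { move=> f. rewrite -{1}(idL _ _ f) -{1}zZ -!compA rnat_inv (cA (eq_sym (tswap _ _ _ _ _ _))).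
    rewrite -(tid Y Z) -!compA (cA (anat_inv _ _ _ _ _ _ _ _ _)). by rewrite tcomp1 -!compA. }
  move=> f f' E'. by rewrite (key f) (key f') E'.
Qed.

Lemma can_prop {Y Z1 Z2 : ob C} (E1 : hom (tens Z1 Y) unit) {E2 C2} :
  @DP C Y Z2 E2 C2 -> E2 ⊚ (canm E1 C2 ⊗ idm Y) = E1.
Proof.
  move=> [zY _].
  transitivity (E1 ⊚ (idm Z1 ⊗ (rho Y ⊚ ((idm Y ⊗ E2) ⊚ (alpha Y Z2 Y ⊚ ((C2 ⊗ idm Y) ⊚ lam_inv Y)))))); last first.
  { by rewrite zY tid idR. }
  symmetry. rewrite !t1comp kelly2' -!compA compA -rnat -kelly3 -!compA.
  rewrite (cA (anat_inv _ _ _ _ _ _ _ _ _)) -?compA (tid Z1 Y) (cA (tswap _ _ _ _ _ _)) -?compA (cA (lnat _ _ _)) -?compA.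
  rewrite (cA (pentA _ _ _ _)) -?compA -(tid Z2 Y) (cA (eq_sym (anat _ _ _ _ _ _ _ _ _))) -?compA.
  rewrite (cA (kelly1 _ _)) -?compA (cA (anat_inv _ _ _ _ _ _ _ _ _)) -?compA tri_inv.
  by rewrite /canm !tcomp1.
Qed.

Lemma kelly1_inv (x y : ob C) : alpha_inv unit x y ⊚ lam_inv (tens x y) = lam_inv x ⊗ idm y.
Proof.
  apply: (inv_eq (lam (tens x y)) _ (alpha unit x y) _ _ _ _ _ _ (kelly1 x y)).
  - by apply: lK. - by apply: aK. - by apply: tK1; apply: lK'.
Qed.
Lemma kelly2_inv (x y : ob C) : idm x ⊗ rho_inv y = alpha x y unit ⊚ rho_inv (tens x y).
Proof.
  have E : alpha_inv x y unit ⊚ (idm x ⊗ rho_inv y) = rho_inv (tens x y).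
  { apply: (inv_eq (idm x ⊗ rho y) _ (alpha x y unit) _ _ _ _ _ _ (kelly2 x y)).
    - by apply: t1K; apply: rK. - by apply: aK. - by apply: rK'. }
  by rewrite -E compA aK' idL.
Qed.
Lemma kelly3_inv : lam_inv (@unit C) = rho_inv unit.
Proof. by rewrite -(idR _ _ (lam_inv unit)) -(rK' unit) compA -kelly3 lK idL. Qed.

Lemma pentB (w x y z : ob C) : (idm w ⊗ alpha_inv x y z) ⊚ alpha w x (tens y z)
  = alpha w (tens x y) z ⊚ ((alpha w x y ⊗ idm z) ⊚ alpha_inv (tens w x) y z).
Proof.
  rewrite -(idR _ _ (_ ⊚ alpha w x (tens y z))) -(aK' (tens w x) y z) !compA.
  rewrite -(compA _ _ _ _ (alpha (tens w x) y z)) pent !compA -t1comp aK tid idL. done.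
Qed.

Lemma can_coev {Y Z Z' : ob C} {E Cv} (u : hom unit (tens Y Z')) :
  @DP C Y Z E Cv -> (idm Y ⊗ canm E u) ⊚ Cv = u.
Proof.
  move=> [zY _].
  transitivity ((rho Y ⊚ ((idm Y ⊗ E) ⊚ (alpha Y Z Y ⊚ ((Cv ⊗ idm Y) ⊚ lam_inv Y)))) ⊗ idm Z' ⊚ u); last first.
  { by rewrite zY tid idL. }
  rewrite /canm !t1comp -!compA kelly2_inv -?compA rnat_inv -kelly3_inv.
  rewrite (cA (eq_sym (anat _ _ _ _ _ _ _ _ _))) -?compA (tid Y Z).
  rewrite (cA (eq_sym (tswap _ _ _ _ _ _))) -?compA -lnat_inv.
  rewrite (cA (pentB _ _ _ _)) -?compA (cA (eq_sym (anat _ _ _ _ _ _ _ _ _))) -?compA.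
  rewrite (cA (tri _ _)) -?compA -(tid Y Z') (cA (anat_inv _ _ _ _ _ _ _ _ _)) -?compA.
  by rewrite (cA (kelly1_inv _ _)) !tcomp1 -!compA.
Qed.

End Duals.

Lemma DP_of_op {C : MonData} {HC : Mon C} (Y Z : ob C) E Cv :
  @DP (op C) Y Z E Cv -> @DP C Z Y Cv E.
Proof. move=> [h1 h2]; split; [move: h2 | move: h1]; rewrite /= -!compA; done. Qed.

Class Sym (C : MonData) : Prop := sym_ax : is_symmon C.
#[export] Instance sym_mon (C : MonData) {HS : Sym C} : Mon C := symmon_mon C HS.

Section Sym.
Context {C : MonData} {HS : Sym C}.

Lemma bnat (x x' y y' : ob C) (f : hom x x') (g : hom y y') :
  braid x' y' ⊚ (f ⊗ g) = (g ⊗ f) ⊚ braid x y.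
Proof. apply HS. Qed.
Lemma bb (x y : ob C) : braid y x ⊚ braid x y = idm (tens x y).
Proof. apply HS. Qed.
Lemma hex (x y z : ob C) :
  alpha y z x ⊚ (braid x (tens y z) ⊚ alpha x y z)
  = (idm y ⊗ braid x z) ⊚ (alpha y x z ⊚ (braid x y ⊗ idm z)).
Proof. apply HS. Qed.

Lemma b1 (x : ob C) : lam x ⊚ braid x unit = rho x.
Proof.
  apply: faith_r.
  apply: (iso_l _ _ (bb x unit)).
  have H := hex x unit unit.
  have L : lam (tens unit x) ⊚ (alpha unit unit x ⊚ (braid x (tens unit unit) ⊚ alpha x unit unit))
         = braid x unit ⊚ (rho x ⊗ idm unit).
  { rewrite compA kelly1 (cA (eq_sym (bnat _ _ _ _ _ _))) -?compA tri. done. }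
  rewrite H in L.
  rewrite compA lnat -compA (cA (kelly1 _ _)) -tcomp1 in L.
  symmetry. rewrite -L. done.
Qed.

Lemma b1' (x : ob C) : rho x ⊚ braid unit x = lam x.
Proof. by rewrite -b1 -compA bb idR. Qed.
Lemma rho_inv_b (x : ob C) : rho_inv x = braid unit x ⊚ lam_inv x.
Proof.
  apply: (iso_l _ _ (rK x)). by rewrite rK' compA b1' lK'.
Qed.
Lemma lam_inv_b (x : ob C) : lam_inv x = braid x unit ⊚ rho_inv x.
Proof.
  apply: (iso_l _ _ (lK x)). by rewrite lK' compA b1 rK'.
Qed.

Lemma hex2 (x y z : ob C) :
  alpha_inv z x y ⊚ (braid (tens x y) z ⊚ alpha_inv x y z)
  = (braid x z ⊗ idm y) ⊚ (alpha_inv x z y ⊚ (idm x ⊗ braid y z)).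
Proof.
  have H := hex z x y.
  have hB : (alpha_inv z x y ⊚ braid (tens x y) z) ⊚ (braid z (tens x y) ⊚ alpha z x y) = idm _.
  { by rewrite -!compA (cA (bb _ _)) idL aK. }
  have hD : ((idm x ⊗ braid z y) ⊚ (alpha x z y ⊚ (braid z x ⊗ idm y))) ⊚
            ((braid x z ⊗ idm y) ⊚ (alpha_inv x z y ⊚ (idm x ⊗ braid y z))) = idm _.
  { rewrite -!compA (cA (tK1 _ _ _ _ _ (bb _ _))) idL (cA (aK' _ _ _)) idL. by apply: t1K; apply: bb. }
  have E := inv_eq _ _ _ _ _ _ (aK x y z) hB hD H.
  rewrite -compA in E. by apply: E; apply: sym_mon.
Qed.

Lemma Qid (A B : ob C) :
  (braid B A ⊗ idm A) ⊚ (braid A (tens B A) ⊚ (alpha A B A ⊚ (braid A (tens A B) ⊚ (idm A ⊗ braid B A))))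
  = alpha_inv A B A.
Proof.
  have E1 : braid A (tens B A) ⊚ alpha A B A
     = alpha_inv B A A ⊚ ((idm B ⊗ braid A A) ⊚ (alpha B A A ⊚ (braid A B ⊗ idm A))).
  { by rewrite -hex compA aK idL. }
  have E2 := hex2 B A A.
  rewrite (cA E1) -?compA (cA3 (eq_sym E2)) -?compA (cA (aK _ _ _)) idL.
  rewrite (cA (eq_sym (bnat _ _ _ _ _ _))) -?compA (cA (bb _ _)) idL.
  by rewrite (t1K _ _ _ _ _ (bb _ _)) idR.
Qed.

Lemma Qid' (A B : ob C) :
  (idm A ⊗ braid A B) ⊚ (braid (tens A B) A ⊚ (alpha_inv A B A ⊚ (braid (tens B A) A ⊚ (braid A B ⊗ idm A))))
  = alpha A B A.
Proof.
  set X := (_ ⊚ (_ ⊚ (_ ⊚ (_ ⊚ _)))).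
  have XX : (braid B A ⊗ idm A) ⊚ (braid A (tens B A) ⊚ (alpha A B A ⊚ (braid A (tens A B) ⊚ (idm A ⊗ braid B A)))) ⊚ X = idm _.
  { rewrite /X -!compA (cA (t1K _ _ _ _ _ (bb _ _))) idL (cA (bb _ _)) idL (cA (aK' _ _ _)) idL.
    rewrite (cA (bb _ _)) idL. by apply: tK1; apply: bb. }
  rewrite Qid in XX.
  by rewrite -(idL _ _ X) -(aK' A B A) -compA XX idR.
Qed.

Lemma Qid_r (A B v : ob C) (r : hom v _) :
  (braid B A ⊗ idm A) ⊚ (braid A (tens B A) ⊚ (alpha A B A ⊚ (braid A (tens A B) ⊚ ((idm A ⊗ braid B A) ⊚ r))))
  = alpha_inv A B A ⊚ r.
Proof. by rewrite -Qid -!compA. Qed.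
Lemma Qid'_r (A B v : ob C) (r : hom v _) :
  (idm A ⊗ braid A B) ⊚ (braid (tens A B) A ⊚ (alpha_inv A B A ⊚ (braid (tens B A) A ⊚ ((braid A B ⊗ idm A) ⊚ r))))
  = alpha A B A ⊚ r.
Proof. by rewrite -Qid' -!compA. Qed.

Lemma DP_swap {Y Z : ob C} {E Cv} : @DP C Y Z E Cv -> @DP C Z Y (E ⊚ braid Y Z) (braid Y Z ⊚ Cv).
Proof.
  move=> [zY zZ]; split.
  - rewrite lam_inv_b -b1 -compA (cA (bnat _ _ _ _ _ _)) -?compA.
    rewrite (cA (eq_sym (bnat _ _ _ _ (idm Z) (braid Y Z ⊚ Cv)))) -?compA tcomp1 t1comp -?compA Qid_r. exact zZ.
  - rewrite rho_inv_b -b1' -compA (cA (bnat _ _ _ _ _ _)) -?compA.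
    rewrite (cA (eq_sym (bnat _ _ _ _ (braid Y Z ⊚ Cv) (idm Y)))) -?compA tcomp1 t1comp -?compA Qid'_r. exact zY.
Qed.

End Sym.

Section Fun.
Context {C D : MonData} {HC : Mon C} {HD : Mon D} (F : SMFun C D) (HF : is_smfun F).

Lemma Fid (x : ob C) : fhom F (idm x) = idm (fob F x). Proof. apply HF. Qed.
Lemma Fcomp (x y z : ob C) (f : hom x y) (g : hom y z) : fhom F (g ⊚ f) = fhom F g ⊚ fhom F f.
Proof. apply HF. Qed.
Lemma muK (x y : ob C) : fmu_inv F x y ⊚ fmu F x y = idm _. Proof. apply HF. Qed.
Lemma muK' (x y : ob C) : fmu F x y ⊚ fmu_inv F x y = idm _. Proof. apply HF. Qed.
Lemma epsK : feps_inv F ⊚ feps F = idm _. Proof. apply HF. Qed.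
Lemma epsK' : feps F ⊚ feps_inv F = idm _. Proof. apply HF. Qed.
Lemma munat (x x' y y' : ob C) (f : hom x x') (g : hom y y') :
  fmu F x' y' ⊚ (fhom F f ⊗ fhom F g) = fhom F (f ⊗ g) ⊚ fmu F x y.
Proof. apply HF. Qed.
Lemma Falpha (x y z : ob C) :
  fhom F (alpha x y z) ⊚ (fmu F (tens x y) z ⊚ (fmu F x y ⊗ idm _))
  = fmu F x (tens y z) ⊚ ((idm _ ⊗ fmu F y z) ⊚ alpha (fob F x) (fob F y) (fob F z)).
Proof. apply HF. Qed.
Lemma Flam (x : ob C) : fhom F (lam x) ⊚ (fmu F unit x ⊚ (feps F ⊗ idm _)) = lam (fob F x).
Proof. apply HF. Qed.
Lemma Frho (x : ob C) : fhom F (rho x) ⊚ (fmu F x unit ⊚ (idm _ ⊗ feps F)) = rho (fob F x).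
Proof. apply HF. Qed.

Lemma munat_inv (x x' y y' : ob C) (f : hom x x') (g : hom y y') :
  fmu_inv F x' y' ⊚ fhom F (f ⊗ g) = (fhom F f ⊗ fhom F g) ⊚ fmu_inv F x y.
Proof. apply: nat_inv; [apply: muK' | apply: muK | by rewrite munat]. Qed.

Lemma Fiso {x y : ob C} (f : hom x y) (g : hom y x) : g ⊚ f = idm x -> fhom F g ⊚ fhom F f = idm _.
Proof. move=> E. by rewrite -Fcomp E Fid. Qed.

Lemma Falpha' (x y z : ob C) :
  fhom F (alpha x y z) = fmu F x (tens y z) ⊚ ((idm _ ⊗ fmu F y z) ⊚ (alpha (fob F x) (fob F y) (fob F z)
     ⊚ ((fmu_inv F x y ⊗ idm _) ⊚ fmu_inv F (tens x y) z))).
Proof.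
  symmetry. rewrite (cA3 (eq_sym (Falpha x y z))) -!compA (cA (tK1 _ _ _ _ _ (muK' _ _))) idL.
  by rewrite muK' idR.
Qed.

Lemma Falpha_inv' (x y z : ob C) :
  fhom F (alpha_inv x y z) = fmu F (tens x y) z ⊚ ((fmu F x y ⊗ idm _) ⊚ (alpha_inv (fob F x) (fob F y) (fob F z)
     ⊚ ((idm _ ⊗ fmu_inv F y z) ⊚ fmu_inv F x (tens y z)))).
Proof.
  apply: (iso_l _ _ (Fiso _ _ (aK x y z))).
  rewrite -Fcomp aK' Fid Falpha' -!compA (cA (muK _ _)) idL (cA (tK1 _ _ _ _ _ (muK _ _))) idL.
  rewrite (cA (aK' _ _ _)) idL (cA (t1K _ _ _ _ _ (muK' _ _))) idL. by rewrite muK'.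
Qed.

Lemma Flam_inv (x : ob C) : lam_inv (fob F x) = (feps_inv F ⊗ idm _) ⊚ (fmu_inv F unit x ⊚ fhom F (lam_inv x)).
Proof.
  apply: (iso_l _ _ (lK (fob F x))). rewrite lK' -Flam -!compA (cA (tK1 _ _ _ _ _ epsK')) idL.
  by rewrite (cA (muK' _ _)) idL -Fcomp lK' Fid.
Qed.
Lemma Frho_inv (x : ob C) : rho_inv (fob F x) = (idm _ ⊗ feps_inv F) ⊚ (fmu_inv F x unit ⊚ fhom F (rho_inv x)).
Proof.
  apply: (iso_l _ _ (rK (fob F x))). rewrite rK' -Frho -!compA (cA (t1K _ _ _ _ _ epsK')) idL.
  by rewrite (cA (muK' _ _)) idL -Fcomp rK' Fid.
Qed.

Lemma munat1l (x y y' : ob C) (g : hom y y') :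
  fmu F x y' ⊚ (idm (fob F x) ⊗ fhom F g) = fhom F (idm x ⊗ g) ⊚ fmu F x y.
Proof. by rewrite -Fid munat. Qed.
Lemma munat1r (x x' y : ob C) (f : hom x x') :
  fmu F x' y ⊚ (fhom F f ⊗ idm (fob F y)) = fhom F (f ⊗ idm y) ⊚ fmu F x y.
Proof. by rewrite -Fid munat. Qed.
Lemma munat1l_inv (x y y' : ob C) (g : hom y y') :
  (idm (fob F x) ⊗ fhom F g) ⊚ fmu_inv F x y = fmu_inv F x y' ⊚ fhom F (idm x ⊗ g).
Proof. by rewrite -Fid munat_inv. Qed.
Lemma munat1r_inv (x x' y : ob C) (f : hom x x') :
  (fhom F f ⊗ idm (fob F y)) ⊚ fmu_inv F x y = fmu_inv F x' y ⊚ fhom F (f ⊗ idm y).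
Proof. by rewrite -Fid munat_inv. Qed.

Lemma Falpha'_r (x y z : ob C) v (r : hom v _) :
  fmu F x (tens y z) ⊚ ((idm _ ⊗ fmu F y z) ⊚ (alpha (fob F x) (fob F y) (fob F z)
     ⊚ ((fmu_inv F x y ⊗ idm _) ⊚ (fmu_inv F (tens x y) z ⊚ r)))) = fhom F (alpha x y z) ⊚ r.
Proof. by rewrite Falpha' -!compA. Qed.
Lemma Falpha_inv'_r (x y z : ob C) v (r : hom v _) :
  fmu F (tens x y) z ⊚ ((fmu F x y ⊗ idm _) ⊚ (alpha_inv (fob F x) (fob F y) (fob F z)
     ⊚ ((idm _ ⊗ fmu_inv F y z) ⊚ (fmu_inv F x (tens y z) ⊚ r)))) = fhom F (alpha_inv x y z) ⊚ r.
Proof. by rewrite Falpha_inv' -!compA. Qed.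

Lemma DP_fun {Y Z : ob C} {E Cv} : @DP C Y Z E Cv ->
  @DP D (fob F Y) (fob F Z) (feps_inv F ⊚ (fhom F E ⊚ fmu F Z Y)) (fmu_inv F Y Z ⊚ (fhom F Cv ⊚ feps F)).
Proof.
  move=> [zY zZ]; split.
  - rewrite -Frho Flam_inv -!compA !t1comp !tcomp1 -!compA.
    rewrite (cA (t1K _ _ _ _ _ epsK')) idL (cA (tK1 _ _ _ _ _ epsK')) idL.
    rewrite (cA (munat1l _ _ _ _)) -?compA (cA (munat1r_inv _ _ _ _)) -?compA Falpha'_r.
    by rewrite -!Fcomp zY Fid.
  - rewrite -Flam Frho_inv -!compA !t1comp !tcomp1 -!compA.
    rewrite (cA (tK1 _ _ _ _ _ epsK')) idL (cA (t1K _ _ _ _ _ epsK')) idL.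
    rewrite (cA (munat1r _ _ _ _)) -?compA (cA (munat1l_inv _ _ _ _)) -?compA Falpha_inv'_r.
    by rewrite -!Fcomp zZ Fid.
Qed.

End Fun.


#[export] Instance mon_op_inst (C : MonData) {HC : Mon C} : Mon (op C) := mon_op C HC.

Section SMAI.
Context (S : SMAI) (HS : is_SMAI S).
#[local] Instance symS : Sym (smC S) := proj1 HS.
Local Notation C := (smC S).
Lemma Hd : is_smfun (dF S). Proof. apply HS. Qed.

Definition epsd : @hom C (dob S unit) unit := feps (dF S).
Definition epsd_inv : @hom C unit (dob S unit) := feps_inv (dF S).
Definition chi' (x y : ob C) : @hom C (dob S (tens x y)) (tens (dob S x) (dob S y)) := fmu (dF S) x y.

Definition W {y z : ob C} (c : hom unit (tens y z)) : hom (tens (dob S y) (dob S z)) unit :=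
  epsd ⊚ (dhom S c ⊚ chi S y z).
Definition cop {y z : ob C} (e : hom (tens z y) unit) : hom unit (tens (dob S z) (dob S y)) :=
  chi' z y ⊚ (dhom S e ⊚ epsd_inv).

Lemma D1 {y z : ob C} {e c} : @DP C y z e c -> @DP C (dob S z) (dob S y) (W c) (cop e).
Proof.
  move=> H.
  pose proof (@DP_of_op C _ _ _ _ _ (@DP_fun C (op C) _ _ (dF S) Hd _ _ _ _ H)) as H2.
  rewrite /DP /= -!compA in H2. exact H2.
Qed.

Lemma dcomp (x y z : ob C) (f : hom x y) (g : hom y z) : dhom S (g ⊚ f) = dhom S f ⊚ dhom S g.
Proof. exact: (Fcomp (dF S) Hd). Qed.
Lemma did (x : ob C) : dhom S (idm x) = idm (dob S x).
Proof. exact: (Fid (dF S) Hd). Qed.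
Lemma chinat (x x' y y' : ob C) (f : hom x x') (g : hom y y') :
  chi S x y ⊚ (dhom S f ⊗ dhom S g) = dhom S (f ⊗ g) ⊚ chi S x' y'.
Proof. symmetry. exact: (munat_inv (dF S) Hd). Qed.
Lemma chiK (x y : ob C) : chi S x y ⊚ chi' x y = idm _.
Proof. exact: (muK' (dF S) Hd). Qed.
Lemma chiK' (x y : ob C) : chi' x y ⊚ chi S x y = idm _.
Proof. exact: (muK (dF S) Hd). Qed.
Lemma epsdK : epsd ⊚ epsd_inv = idm _.
Proof. exact: (epsK (dF S) Hd). Qed.
Lemma epsdK' : epsd_inv ⊚ epsd = idm _.
Proof. exact: (epsK' (dF S) Hd). Qed.

Lemma chib (x y : ob C) : dhom S (braid x y) ⊚ chi S y x = chi S x y ⊚ braid (dob S y) (dob S x).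
Proof.
  have E := proj2 (proj2 (proj2 (proj2 (proj2 (proj2 (proj2 (proj2 Hd))))))) x y.
  symmetry. apply: (nat_inv (chi' y x) (chi S y x) (chi' x y) (chi S x y)).
  - exact: chiK'.
  - exact: chiK.
  - exact: E.
Qed.

Lemma W_nat {y z z' : ob C} (c : hom unit (tens y z)) (g : hom z z') :
  W ((idm y ⊗ g) ⊚ c) = W c ⊚ (idm (dob S y) ⊗ dhom S g).
Proof.
  rewrite /W dcomp -!compA -did chinat. done.
Qed.

Lemma W_braid {y z : ob C} (c : hom unit (tens y z)) :
  W (braid y z ⊚ c) = W c ⊚ braid (dob S z) (dob S y).
Proof. by rewrite /W dcomp -!compA chib. Qed.

Section Du.
Context (D : DualData C) (HDu : is_duals D).

Lemma DPc (x : ob C) : DP x (dual D x) (ev D x) (coev D x).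
Proof. split; [exact: (proj1 HDu x) | exact: (proj2 HDu x)]. Qed.

Lemma dualh_can {x y : ob C} (f : hom x y) :
  dualh D f = canm (ev D y ⊚ (idm _ ⊗ f)) (coev D x).
Proof. by rewrite /dualh /canm tcomp1 -compA. Qed.

Lemma mate {x y : ob C} (f : hom x y) :
  ev D x ⊚ (dualh D f ⊗ idm x) = ev D y ⊚ (idm _ ⊗ f).
Proof. rewrite dualh_can. exact: (can_prop (ev D y ⊚ (idm _ ⊗ f)) (DPc x)). Qed.

Lemma dualh_inv {x y : ob C} (q : hom x y) (q' : hom y x) :
  q ⊚ q' = idm y -> dualh D q' ⊚ dualh D q = idm _.
Proof.
  move=> E. apply: (detL (DPc y)).
  by rewrite tcomp1 compA mate -compA -tswap compA mate -compA -t1comp E.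
Qed.

Lemma kappa_R {x : ob C} (h : hom x (dob S x)) (k : hom (dual D x) (dual D (dob S x))) :
  dualh D h ⊚ k = idm _ ->
  W (coev D x) ⊚ (h ⊗ (kappa D x ⊚ k)) = ev D x ⊚ braid x (dual D x).
Proof.
  move=> hk.
  have K : (W (coev D x) ⊚ braid (dob S (dual D x)) (dob S x)) ⊚ (kappa D x ⊗ idm (dob S x))
           = ev D (dob S x) := can_prop _ (DP_swap (D1 (DPc x))).
  have K2 : (W (coev D x) ⊚ braid (dob S (dual D x)) (dob S x)) ⊚ ((kappa D x ⊚ k) ⊗ h) = ev D x.
  { rewrite -(idL _ _ h) tcomp compA K tsplit2 compA -mate -compA -tcomp1 hk. by rewrite tid idR. }
  rewrite -(idR _ _ (W _ ⊚ _)) -(bb x (dual D x)) !compA -(compA _ _ _ _ _ _ (W _)).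
  by rewrite -bnat compA K2.
Qed.

Lemma G2 (fl : forall x : ob C, hom x x) (P : Pairings S)
  (HP : is_closed_pos P) (Hc : ferm_dagger_compact D fl P) (Hfl : is_fermion_action fl)
  {y z : ob C} {e : hom (tens z y) unit} {c : hom unit (tens y z)}
  (q : hom y (dob S y)) (p : hom z (dob S z)) :
  DP y z e c -> P y q -> W c ⊚ (q ⊗ p) = e ⊚ braid y z -> P z (p ⊚ fl z).
Proof.
  move=> Hdp Pq R.
  have [q' [hq1 hq2]] : is_iso q by case: (proj1 HP y q Pq).
  set k := dualh D q'.
  have hk1 : k ⊚ dualh D q = idm _ := dualh_inv q q' hq2.
  have hk2 : dualh D q ⊚ k = idm _ := dualh_inv q' q hq1.
  have P0 := Hc y q Pq k hk1 hk2.
  have R0 := kappa_R q k hk2.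
  set g := canm e (coev D y).
  have hg1 : ev D y ⊚ (g ⊗ idm y) = e := can_prop e (DPc y).
  have hg2 : (idm y ⊗ g) ⊚ c = coev D y := can_coev (coev D y) Hdp.
  set g' := canm (ev D y) c.
  have hg'1 : e ⊚ (g' ⊗ idm y) = ev D y := can_prop (ev D y) Hdp.
  have gg1 : g' ⊚ g = idm z.
  { apply: (detL Hdp). by rewrite tcomp1 compA hg'1 hg1 tid idR. }
  have gg2 : g ⊚ g' = idm _.
  { apply: (detL (DPc y)). by rewrite tcomp1 compA hg1 hg'1 tid idR. }
  have Pt := proj2 (proj2 (proj2 HP)) z (dual D y) g _ (ex_intro _ g' (conj gg1 gg2)) P0.
  have U : p = dhom S g ⊚ ((kappa D y ⊚ k) ⊚ g).
  { apply: (detR (D1 Hdp)).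
    have T : forall f : hom z (dob S z), W c ⊚ (idm _ ⊗ f) = (W c ⊚ (q ⊗ f)) ⊚ (q' ⊗ idm z).
    { move=> f. by rewrite -compA -tcomp hq2 idR. }
    rewrite !T R. congr (_ ⊚ _).
    have -> : q ⊗ (dhom S g ⊚ ((kappa D y ⊚ k) ⊚ g)) = (idm _ ⊗ dhom S g) ⊚ ((q ⊗ (kappa D y ⊚ k)) ⊚ (idm _ ⊗ g)).
    { by rewrite -!tcomp idL idR. }
    rewrite compA -W_nat hg2 compA R0 -compA bnat compA hg1. done. }
  have -> : p ⊚ fl z = dhom S g ⊚ ((kappa D y ⊚ (k ⊚ fl (dual D y))) ⊚ g).
  { rewrite U (compA _ _ _ _ (fl (dual D y)) k (kappa D y)).
    move: (kappa D y ⊚ k) (dhom S g) => KK dg.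
    by rewrite -(compA _ _ _ _ (fl z) (KK ⊚ g) dg) -(compA _ _ _ _ (fl z) g KK) -(compA _ _ _ _ g (fl (dual D y)) KK) (proj1 Hfl _ _ g). }
  exact Pt.
Qed.

End Du.

End SMAI.


Section Trans.
Context (S1 S2 : SMAI) (HS1 : is_SMAI S1) (HS2 : is_SMAI S2)
  (F : SMFun (smC S1) (smC S2))
  (phi : forall x, @hom (smC S2) (fob F (dob S1 x)) (dob S2 (fob F x)))
  (HF : is_SMAI_functor F phi).
#[local] Instance symS1 : Sym (smC S1) := proj1 HS1.
#[local] Instance symS2 : Sym (smC S2) := proj1 HS2.
Local Notation C1 := (smC S1).
Local Notation C2 := (smC S2).

Lemma HF1 : is_smfun F. Proof. apply HF. Qed.

Lemma phinat (x y : ob C1) (f : hom x y) :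
  dhom S2 (fhom F f) ⊚ phi y = phi x ⊚ fhom F (dhom S1 f).
Proof. exact: (proj1 (proj1 (proj2 HF)) x y f). Qed.

Lemma phimon (x y : ob C1) :
  (chi' S2 (fob F x) (fob F y) ⊚ dhom S2 (fmu F x y)) ⊚ phi (tens x y)
  = (phi x ⊗ phi y) ⊚ (fmu_inv F (dob S1 x) (dob S1 y) ⊚ fhom F (chi' S1 x y)).
Proof. exact: (proj1 (proj2 (proj1 (proj2 HF))) x y). Qed.

Lemma phiunit :
  (epsd S2 ⊚ dhom S2 (feps F)) ⊚ phi unit = feps_inv F ⊚ fhom F (epsd S1).
Proof. exact: (proj1 (proj2 (proj2 (proj1 (proj2 HF))))). Qed.

Lemma phimon' (x y : ob C1) :
  dhom S2 (fmu_inv F x y) ⊚ (chi S2 (fob F x) (fob F y) ⊚ (phi x ⊗ phi y))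
  = phi (tens x y) ⊚ (fhom F (chi S1 x y) ⊚ fmu F (dob S1 x) (dob S1 y)).
Proof.
  rewrite compA.
  apply: (nat_inv _ _ _ _ _ _ _ _ (phimon x y)).
  - rewrite -!compA (compA _ _ _ _ (fmu F _ _) (fhom F (chi S1 x y)) (fhom F (chi' S1 x y))).
    by rewrite -(Fcomp F HF1) (chiK' S1 HS1) (Fid F HF1) idL (muK F HF1).
  - rewrite -!compA (cA (chiK S2 HS2 _ _)) idL -(dcomp S2 HS2) (muK' F HF1). exact: did.
Qed.

Lemma Fbraid (x y : ob C1) : fhom F (braid x y) ⊚ fmu F x y = fmu F y x ⊚ braid (fob F x) (fob F y).
Proof. exact: (proj2 (proj2 (proj2 (proj2 (proj2 (proj2 (proj2 (proj2 HF1)))))))). Qed.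

Lemma FcompR {x y z : ob C1} (f : hom x y) (g : hom y z) v (r : hom v _) :
  fhom F g ⊚ (fhom F f ⊚ r) = fhom F (g ⊚ f) ⊚ r.
Proof. by rewrite (Fcomp F HF1) compA. Qed.

Lemma Ttrans {y z : ob C1} (e : hom (tens z y) unit) (c : hom unit (tens y z)) q p :
  W S1 c ⊚ (q ⊗ p) = e ⊚ braid y z ->
  W S2 (fmu_inv F y z ⊚ (fhom F c ⊚ feps F)) ⊚ ((phi y ⊚ fhom F q) ⊗ (phi z ⊚ fhom F p))
   = (feps_inv F ⊚ (fhom F e ⊚ fmu F z y)) ⊚ braid (fob F y) (fob F z).
Proof.
  move=> R. rewrite /W compA in R.
  have PU := phiunit. rewrite -compA in PU.
  rewrite /W (dcomp S2 HS2) (dcomp S2 HS2) tcomp -!compA.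
  rewrite (cA3 (phimon' y z)) -?compA (cA (phinat _ _ c)) -?compA (cA3 PU) -?compA.
  rewrite (munat F HF1) !FcompR R (Fcomp F HF1) -!compA (Fbraid _ _).
  by rewrite -?compA.
Qed.

End Trans.

Theorem mainTheorem18
  (S1 S2 : SMAI)
  (D1 : DualData (smC S1)) (D2 : DualData (smC S2))
  (fl1 : forall x : ob (smC S1), @hom (smC S1) x x)
  (fl2 : forall x : ob (smC S2), @hom (smC S2) x x)
  (P1 : Pairings S1) (P2 : Pairings S2)
  (F : SMFun (smC S1) (smC S2))
  (phi : forall x, @hom (smC S2) (fob F (dob S1 x)) (dob S2 (fob F x)))
  (HS1 : is_SMAI S1) (HS2 : is_SMAI S2)
  (HD1 : is_duals D1) (HD2 : is_duals D2)
  (Hfl1 : is_fermion_action fl1) (Hfl2 : is_fermion_action fl2)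
  (HP1 : is_closed_pos P1) (HP2 : is_closed_pos P2)
  (Hc1 : ferm_dagger_compact D1 fl1 P1) (Hc2 : ferm_dagger_compact D2 fl2 P2)
  (HF : is_SMAI_functor F phi)
  (HFP : pairings_sub (image_pairings F phi P1) P2) :
  pairings_sub (image_pairings F phi (Ptilde fl1 P1)) (Ptilde fl2 P2).
Proof.
  have I1 : Sym (smC S1) := proj1 HS1.
  have I2 : Sym (smC S2) := proj1 HS2.
  move=> y k [x [h [[h0 [Ph0 Eh]]] [e He]]].
  subst y. cbv beta iota in He. subst h k.
  set k := phi x ⊚ fhom F (h0 ⊚ fl1 x).
  exists (k ⊚ fl2 (fob F x)). split; last first.
  { by rewrite -compA (proj1 (proj2 (proj2 (proj2 Hfl2)))) idR. }
  have [h0' [a b]] : is_iso h0 by case: (proj1 HP1 x h0 Ph0).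
  set k1 := dualh D1 h0'.
  have hk1 : k1 ⊚ dualh D1 h0 = idm _ := dualh_inv S1 HS1 D1 HD1 h0 h0' b.
  have hk2 : dualh D1 h0 ⊚ k1 = idm _ := dualh_inv S1 HS1 D1 HD1 h0' h0 a.
  have Ph' := Hc1 x h0 Ph0 k1 hk1 hk2.
  have R0 := kappa_R S1 HS1 D1 HD1 h0 k1 hk2.
  pose proof (DP_swap (DPc S1 D1 HD1 x)) as DPs.
  set h' := kappa D1 x ⊚ (k1 ⊚ fl1 (dual D1 x)).
  have Rs : W S1 (braid x (dual D1 x) ⊚ coev D1 x) ⊚ (h' ⊗ (h0 ⊚ fl1 x))
            = (ev D1 x ⊚ braid x (dual D1 x)) ⊚ braid (dual D1 x) x.
  { rewrite (W_braid S1 HS1) -compA bnat compA. congr (_ ⊚ _).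
    rewrite /h' (compA _ _ _ _ (fl1 (dual D1 x)) k1 (kappa D1 x)).
    move: R0. move: (kappa D1 x ⊚ k1) => p0 R0.
    rewrite (tcomp _ _ _ _ _ _ (fl1 x) h0 (fl1 (dual D1 x)) p0) compA R0 -compA bnat compA.
    rewrite -(proj1 (proj2 Hfl1)) (proj1 Hfl1) (proj1 (proj2 (proj2 Hfl1))) idL. done. }
  pose proof (Ttrans S1 S2 HS1 HS2 F phi HF _ _ _ _ Rs) as RT.
  pose proof (DP_fun F (HF1 S1 S2 F phi HF) DPs) as DP2.
  have Ph'2 : P2 (fob F (dual D1 x)) (phi (dual D1 x) ⊚ fhom F h').
  { apply: HFP. exists (dual D1 x), h'. split; first exact Ph'. by exists eq_refl. }
  exact: (G2 S2 HS2 D2 HD2 fl2 P2 HP2 Hc2 Hfl2 _ _ DP2 Ph'2 RT).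
Qed.
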